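(* Let $Q$ be a multiplicative equivariantly supported based quantal frame with base locale $A$ and support $\varsigma$. Consider the localic graph with $\mathcal O(G_0)=A$, $\mathcal O(G_1)=Q$, $d:G_1\to G_0$ given by $d^*(a)=a\triangleright 1_Q$, $i:G_1\to G_1$ given by $i^*(x)=x^*$, $r=d\circ i$, $G_2$ the pullback of $r$ and $d$ (so $\mathcal O(G_2)=Q\otimes_A Q$, with projections $\pi_1,\pi_2:G_2\to G_1$ satisfying $r\circ\pi_1=d\circ\pi_2$), and $m:G_2\to G_1$ defined by $m^*(a)=\bigvee_{xy\le a}x\otimes y$. Then $G$ is an involutive open semicategory (in particular $d\circ m=d\circ\pi_1$ and $r\circ m=r\circ\pi_2$, $m$ is associative, $i$ is an involution for $m$, and $d$ is open).
   Context: For a locale $A$, an $A$-$A$-bimodule is a sup-lattice $M$ with actions $a\triangleright m$, $m\triangleleft a$ preserving joins in each variable, with $1_A\triangleright m=m$, $(a\wedge b)\triangleright m=a\triangleright(b\triangleright m)$, $m\triangleleft1_A=m$, $m\triangleleft(a\wedge b)=(m\triangleleft a)\triangleleft b$, $(a\triangleright m)\triangleleft b=a\triangleright(m\triangleleft b)$. An $A$-$A$-quantale is such a $Q$ with associative join-preserving multiplication and $(a\triangleright x)y=a\triangleright(xy)$, $(x\triangleleft a)y=x(a\triangleright y)$, $(xy)\triangleleft a=x(y\triangleleft a)$; involutive if there is a join-preserving $x\mapsto x^*$ with $x^{**}=x$, $(xy)^*=y^*x^*$, $(a\triangleright(x\triangleleft b))^*=b\triangleright(x^*\triangleleft a)$.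 $1_Q$ is the top. A support is a join-preserving $\varsigma:Q\to A$ with $\varsigma(1_Q)=1_A$, $\varsigma(x)\triangleright y\le xx^*y$, $\varsigma(x)\triangleright x=x$; equivariant if $\varsigma(a\triangleright x)=a\wedge\varsigma(x)$. A based quantal frame is an involutive $A$-$A$-quantale which is a frame with $(a\triangleright x)\wedge y=a\triangleright(x\wedge y)$, $(x\triangleleft a)\wedge y=(x\wedge y)\triangleleft a$. $Q\otimes_AQ$ is the quotient of the sup-lattice tensor product $Q\otimes Q$ by $x\otimes(a\triangleright y)=(x\triangleleft a)\otimes y$; the multiplication induces $\mu_A:Q\otimes_AQ\to Q$, and $Q$ is multiplicative if the right adjoint of $\mu_A$ preserves arbitrary joins. An involutive open semicategory is an internal category without units in locales (associative composition $m$ with $d\circ m=d\circ\pi_1$, $r\circ m=r\circ\pi_2$), equipped with an involution $i$ ($i\circ i=\mathrm{id}$, $d\circ i=r$) that reverses composition, and with $d$ an open map. *)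

(* Defs.v *)
Section Lattice.
Context {T : Type} (le : T -> T -> Prop) (sup : (T -> Prop) -> T).

Definition is_clat : Prop :=
  (forall x, le x x) /\
  (forall x y z, le x y -> le y z -> le x z) /\
  (forall x y, le x y -> le y x -> x = y) /\
  (forall (S : T -> Prop) x, S x -> le x (sup S)) /\
  (forall (S : T -> Prop) z, (forall x, S x -> le x z) -> le (sup S) z).

Definition lmeet (x y : T) : T := sup (fun z => le z x /\ le z y).
Definition ltop : T := sup (fun _ => True).

Definition is_frame : Prop :=
  is_clat /\
  forall x (S : T -> Prop),
    lmeet x (sup S) = sup (fun z => exists s, S s /\ z = lmeet x s).
End Lattice.

Definition img {X Y : Type} (f : X -> Y) (P : X -> Prop) : Y -> Prop :=
  fun y => exists x, P x /\ y = f x.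

Definition sup_pres {X Y : Type} (supX : (X -> Prop) -> X) (supY : (Y -> Prop) -> Y)
  (f : X -> Y) : Prop := forall P, f (supX P) = supY (img f P).

(* frame homomorphism = inverse image map of a locale map *)
Definition frame_hom {X Y : Type} (leX : X -> X -> Prop) (supX : (X -> Prop) -> X)
  (leY : Y -> Y -> Prop) (supY : (Y -> Prop) -> Y) (f : X -> Y) : Prop :=
  sup_pres supX supY f /\
  (forall x y, f (lmeet leX supX x y) = lmeet leY supY (f x) (f y)) /\
  f (ltop supX) = ltop supY.

Record qdata := QData {
  A : Type;
  leA : A -> A -> Prop;
  supA : (A -> Prop) -> A;
  Q : Type;
  leQ : Q -> Q -> Prop;
  supQ : (Q -> Prop) -> Q;
  actl : A -> Q -> Q;
  actr : Q -> A -> Q;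
  mul : Q -> Q -> Q;
  star : Q -> Q;
  supp : Q -> A
}.

Section QDefs.
Variable D : qdata.

Local Notation A := (A D).
Local Notation Q := (Q D).
Local Notation leA := (leA D).
Local Notation supA := (supA D).
Local Notation leQ := (leQ D).
Local Notation supQ := (supQ D).
Local Notation actl := (actl D).
Local Notation actr := (actr D).
Local Notation mul := (mul D).
Local Notation star := (star D).
Local Notation supp := (supp D).

Definition meetA := lmeet leA supA.
Definition topA := ltop supA.
Definition meetQ := lmeet leQ supQ.
Definition topQ := ltop supQ.

Definition is_bimodule : Prop :=
  is_clat leQ supQ /\
  (forall P m, actl (supA P) m = supQ (img (fun a => actl a m) P)) /\
  (forall a P, actl a (supQ P) = supQ (img (actl a) P)) /\
  (forall m P, actr m (supA P) = supQ (img (actr m) P)) /\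
  (forall P a, actr (supQ P) a = supQ (img (fun m => actr m a) P)) /\
  (forall m, actl topA m = m) /\
  (forall a b m, actl (meetA a b) m = actl a (actl b m)) /\
  (forall m, actr m topA = m) /\
  (forall m a b, actr m (meetA a b) = actr (actr m a) b) /\
  (forall a m b, actr (actl a m) b = actl a (actr m b)).

Definition is_AA_quantale : Prop :=
  is_bimodule /\
  (forall x y z, mul (mul x y) z = mul x (mul y z)) /\
  (forall P y, mul (supQ P) y = supQ (img (fun x => mul x y) P)) /\
  (forall x P, mul x (supQ P) = supQ (img (mul x) P)) /\
  (forall a x y, mul (actl a x) y = actl a (mul x y)) /\
  (forall x a y, mul (actr x a) y = mul x (actl a y)) /\
  (forall x y a, actr (mul x y) a = mul x (actr y a)).

Definition is_involutive_AA_quantale : Prop :=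
  is_AA_quantale /\
  sup_pres supQ supQ star /\
  (forall x, star (star x) = x) /\
  (forall x y, star (mul x y) = mul (star y) (star x)) /\
  (forall a x b, star (actl a (actr x b)) = actl b (actr (star x) a)).

Definition is_based_quantal_frame : Prop :=
  is_frame leA supA /\
  is_involutive_AA_quantale /\
  is_frame leQ supQ /\
  (forall a x y, meetQ (actl a x) y = actl a (meetQ x y)) /\
  (forall x a y, meetQ (actr x a) y = actr (meetQ x y) a).

Definition is_support : Prop :=
  sup_pres supQ supA supp /\
  supp topQ = topA /\
  (forall x y, leQ (actl (supp x) y) (mul (mul x (star x)) y)) /\
  (forall x, actl (supp x) x = x).

Definition is_equivariant_support : Prop :=
  is_support /\ forall a x, supp (actl a x) = meetA a (supp x).

(* An element of Q (x)_A Q is a subset S of Q x Q that is down-closed,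
   closed under joins in each variable (so it is an element of the
   sup-lattice tensor product Q (x) Q, S = \/ {x (x) y | (x,y) in S}),
   and saturated for the relation x (x) (a |> y) = (x <| a) (x) y. *)
Definition tclosed (S : Q -> Q -> Prop) : Prop :=
  (forall x y x' y', S x y -> leQ x' x -> leQ y' y -> S x' y') /\
  (forall P y, (forall x, P x -> S x y) -> S (supQ P) y) /\
  (forall x P, (forall y, P y -> S x y) -> S x (supQ P)) /\
  (forall x a y, S x (actl a y) <-> S (actr x a) y).

(* the join in Q (x)_A Q of the generators x (x) y with P x y *)
Definition tclos (P : Q -> Q -> Prop) : Q -> Q -> Prop :=
  fun u v => forall S, tclosed S -> (forall x y, P x y -> S x y) -> S u v.

Definition teq (S R : Q -> Q -> Prop) : Prop := forall u v, S u v <-> R u v.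

(* Q (x)_A Q (x)_A Q, same construction *)
Definition tclosed3 (S : Q -> Q -> Q -> Prop) : Prop :=
  (forall x y z x' y' z', S x y z -> leQ x' x -> leQ y' y -> leQ z' z -> S x' y' z') /\
  (forall P y z, (forall x, P x -> S x y z) -> S (supQ P) y z) /\
  (forall x P z, (forall y, P y -> S x y z) -> S x (supQ P) z) /\
  (forall x y P, (forall z, P z -> S x y z) -> S x y (supQ P)) /\
  (forall x a y z, S x (actl a y) z <-> S (actr x a) y z) /\
  (forall x y a z, S x y (actl a z) <-> S x (actr y a) z).

Definition tclos3 (P : Q -> Q -> Q -> Prop) : Q -> Q -> Q -> Prop :=
  fun u v w => forall S, tclosed3 S -> (forall x y z, P x y z -> S x y z) -> S u v w.

Definition teq3 (S R : Q -> Q -> Q -> Prop) : Prop := forall u v w, S u v w <-> R u v w.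

Definition muA (S : Q -> Q -> Prop) : Q :=
  supQ (fun q => exists x y, S x y /\ q = mul x y).

(* multiplicative: the right adjoint of mu_A preserves arbitrary joins *)
Definition is_multiplicative : Prop :=
  exists g : Q -> Q -> Q -> Prop,
    (forall a, tclosed (g a)) /\
    (forall S a, tclosed S -> (leQ (muA S) a <-> (forall x y, S x y -> g a x y))) /\
    (forall P, teq (g (supQ P)) (tclos (fun u v => exists a, P a /\ g a u v))).

(* frame homomorphism Q -> Q (x)_A Q *)
Definition tframe_hom (f : Q -> Q -> Q -> Prop) : Prop :=
  (forall x, tclosed (f x)) /\
  (forall P, teq (f (supQ P)) (tclos (fun u v => exists x, P x /\ f x u v))) /\
  (forall x y, teq (f (meetQ x y)) (fun u v => f x u v /\ f y u v)) /\
  teq (f topQ) (fun _ _ => True).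

Definition dstar (a : A) : Q := actl a topQ.
Definition istar (x : Q) : Q := star x.
Definition rstar (a : A) : Q := istar (dstar a).      (* r^* = (d o i)^* = i^* o d^* *)
Definition pi1star (x : Q) : Q -> Q -> Prop :=        (* x (x) 1 *)
  tclos (fun u v => u = x /\ v = topQ).
Definition pi2star (y : Q) : Q -> Q -> Prop :=        (* 1 (x) y *)
  tclos (fun u v => u = topQ /\ v = y).
Definition mstar (a : Q) : Q -> Q -> Prop :=
  tclos (fun x y => leQ (mul x y) a).
(* (m x id)^* and (id x m)^* : Q(x)Q -> Q(x)Q(x)Q, x(x)y(x)z |-> ... *)
Definition m_id_star (S : Q -> Q -> Prop) : Q -> Q -> Q -> Prop :=
  tclos3 (fun x y z => S (mul x y) z).
Definition id_m_star (S : Q -> Q -> Prop) : Q -> Q -> Q -> Prop :=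
  tclos3 (fun x y z => S x (mul y z)).
(* <i o pi2, i o pi1>^* : x (x) y |-> y^* (x) x^* *)
Definition twist_star (S : Q -> Q -> Prop) : Q -> Q -> Prop :=
  fun u v => S (star v) (star u).

(* d is an open locale map: d^* has a left adjoint satisfying Frobenius *)
Definition d_open : Prop :=
  exists l : Q -> A,
    (forall x a, leA (l x) a <-> leQ x (dstar a)) /\
    (forall x a, l (meetQ x (dstar a)) = meetA (l x) a).

Definition involutive_open_semicategory : Prop :=
  frame_hom leA supA leQ supQ dstar /\
  frame_hom leQ supQ leQ supQ istar /\
  tframe_hom pi1star /\ tframe_hom pi2star /\
  tframe_hom mstar /\
  (* pullback square r o pi1 = d o pi2 *)
  (forall a, teq (pi1star (rstar a)) (pi2star (dstar a))) /\
  (* d o m = d o pi1,  r o m = r o pi2 *)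
  (forall a, teq (mstar (dstar a)) (pi1star (dstar a))) /\
  (forall a, teq (mstar (rstar a)) (pi2star (rstar a))) /\
  (* associativity: m o (m x id) = m o (id x m) *)
  (forall a, teq3 (m_id_star (mstar a)) (id_m_star (mstar a))) /\
  (* i o i = id, d o i = r *)
  (forall x, istar (istar x) = x) /\
  (forall a, istar (dstar a) = rstar a) /\
  (* i reverses composition: i o m = m o <i o pi2, i o pi1> *)
  (forall a, teq (mstar (istar a)) (twist_star (mstar a))) /\
  d_open.

End QDefs.

(* Main.v *)
Require Import Defs.
From Stdlib Require Import Setoid.

Section Gen.
Context {T : Type} (le : T -> T -> Prop) (sup : (T -> Prop) -> T) (H : is_clat le sup).

Lemma g_refl x : le x x. Proof. apply H. Qed.
Lemma g_trans x y z : le x y -> le y z -> le x z. Proof. apply H. Qed.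
Lemma g_anti x y : le x y -> le y x -> x = y. Proof. apply H. Qed.
Lemma g_ub (S : T -> Prop) x : S x -> le x (sup S). Proof. apply H. Qed.
Lemma g_lub (S : T -> Prop) z : (forall x, S x -> le x z) -> le (sup S) z. Proof. apply H. Qed.
Lemma g_meet_l x y : le (lmeet le sup x y) x.
Proof. apply g_lub. intros z [? ?]; auto. Qed.
Lemma g_meet_r x y : le (lmeet le sup x y) y.
Proof. apply g_lub. intros z [? ?]; auto. Qed.
Lemma g_meet_glb x y z : le z x -> le z y -> le z (lmeet le sup x y).
Proof. intros; apply g_ub; auto. Qed.
Lemma g_meet_comm x y : lmeet le sup x y = lmeet le sup y x.
Proof. apply g_anti; apply g_meet_glb; (apply g_meet_l || apply g_meet_r). Qed.
Lemma g_top x : le x (ltop sup). Proof. apply g_ub. exact I. Qed.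
End Gen.

Lemma sup_mono {X Y} (leX : X -> X -> Prop) supX (leY : Y -> Y -> Prop) supY (f : X -> Y) :
  is_clat leX supX -> is_clat leY supY -> (forall P, f (supX P) = supY (img f P)) ->
  forall x y, leX x y -> leY (f x) (f y).
Proof.
  intros HX HY Hf x y Hxy.
  assert (E : supX (fun z => z = x \/ z = y) = y).
  { apply (g_anti _ _ HX).
    - apply (g_lub _ _ HX). intros z [-> | ->]; auto. apply (g_refl _ _ HX).
    - apply (g_ub _ _ HX). auto. }
  rewrite <- E, Hf. apply (g_ub _ _ HY). exists x; split; auto.
Qed.

Section Main.
Variable D : qdata.
Hypothesis HQ : is_based_quantal_frame D.
Hypothesis Hs : is_equivariant_support D.
Hypothesis Hm : is_multiplicative D.

Local Notation A := (A D).
Local Notation Q := (Q D).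
Local Notation leA := (leA D).
Local Notation supA := (supA D).
Local Notation leQ := (leQ D).
Local Notation supQ := (supQ D).
Local Notation actl := (actl D).
Local Notation actr := (actr D).
Local Notation mul := (mul D).
Local Notation star := (star D).
Local Notation supp := (supp D).
Local Notation topQ := (topQ D).
Local Notation topA := (topA D).
Local Notation meetQ := (meetQ D).
Local Notation meetA := (meetA D).

Ltac dH := destruct HQ as [[clA _] [[[[clQ [aSA [aSQ [rSA [rSQ [aT [aM [rT [rM rA]]]]]]]]] [mA [mSl [mSr [mAl [mAr rMu]]]]]] [sS [ss [sM sA]]]] [_ [mQl mQr]]]];
  destruct Hs as [[pS [pT [pLe pFix]]] pEq].

Lemma clA : is_clat leA supA. Proof. dH. exact clA. Qed.
Lemma clQ : is_clat leQ supQ. Proof. dH. exact clQ. Qed.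
Lemma actl_supA : forall P m, actl (supA P) m = supQ (img (fun a => actl a m) P). Proof. dH. exact aSA. Qed.
Lemma actl_supQ : forall a P, actl a (supQ P) = supQ (img (actl a) P). Proof. dH. exact aSQ. Qed.
Lemma actr_supA : forall m P, actr m (supA P) = supQ (img (actr m) P). Proof. dH. exact rSA. Qed.
Lemma actr_supQ : forall P a, actr (supQ P) a = supQ (img (fun m => actr m a) P). Proof. dH. exact rSQ. Qed.
Lemma actl_top : forall m, actl topA m = m. Proof. dH. exact aT. Qed.
Lemma actl_meet : forall a b m, actl (meetA a b) m = actl a (actl b m). Proof. dH. exact aM. Qed.
Lemma actr_top : forall m, actr m topA = m. Proof. dH. exact rT. Qed.
Lemma actr_meet : forall m a b, actr m (meetA a b) = actr (actr m a) b. Proof. dH. exact rM. Qed.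
Lemma mul_assoc : forall x y z, mul (mul x y) z = mul x (mul y z). Proof. dH. exact mA. Qed.
Lemma mul_supl : forall P y, mul (supQ P) y = supQ (img (fun x => mul x y) P). Proof. dH. exact mSl. Qed.
Lemma mul_supr : forall x P, mul x (supQ P) = supQ (img (mul x) P). Proof. dH. exact mSr. Qed.
Lemma mul_actl : forall a x y, mul (actl a x) y = actl a (mul x y). Proof. dH. exact mAl. Qed.
Lemma mul_actr : forall x a y, mul (actr x a) y = mul x (actl a y). Proof. dH. exact mAr. Qed.
Lemma actr_mul : forall x y a, actr (mul x y) a = mul x (actr y a). Proof. dH. exact rMu. Qed.
Lemma star_sup : sup_pres supQ supQ star. Proof. dH. exact sS. Qed.
Lemma star_star : forall x, star (star x) = x. Proof. dH. exact ss. Qed.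
Lemma star_mul : forall x y, star (mul x y) = mul (star y) (star x). Proof. dH. exact sM. Qed.
Lemma star_act : forall a x b, star (actl a (actr x b)) = actl b (actr (star x) a). Proof. dH. exact sA. Qed.
Lemma meetQ_actl : forall a x y, meetQ (actl a x) y = actl a (meetQ x y). Proof. dH. exact mQl. Qed.
Lemma supp_sup : sup_pres supQ supA supp. Proof. dH. exact pS. Qed.
Lemma supp_top : supp topQ = topA. Proof. dH. exact pT. Qed.
Lemma supp_le : forall x y, leQ (actl (supp x) y) (mul (mul x (star x)) y). Proof. dH. exact pLe. Qed.
Lemma supp_fix : forall x, actl (supp x) x = x. Proof. dH. exact pFix. Qed.
Lemma supp_eq : forall a x, supp (actl a x) = meetA a (supp x). Proof. dH. exact pEq. Qed.

Definition Qrefl := g_refl _ _ clQ.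
Definition Qtrans := g_trans _ _ clQ.
Definition Qanti := g_anti _ _ clQ.
Definition Arefl := g_refl _ _ clA.
Definition Atrans := g_trans _ _ clA.
Definition Aanti := g_anti _ _ clA.

Lemma actl_mono a b x y : leA a b -> leQ x y -> leQ (actl a x) (actl b y).
Proof.
  intros Hab Hxy. apply Qtrans with (actl a y).
  - apply (sup_mono _ _ _ _ (actl a) clQ clQ (actl_supQ a)); auto.
  - apply (sup_mono _ _ _ _ (fun a => actl a y) clA clQ (fun P => actl_supA P y)); auto.
Qed.
Lemma actr_mono x y a b : leQ x y -> leA a b -> leQ (actr x a) (actr y b).
Proof.
  intros Hxy Hab. apply Qtrans with (actr x b).
  - apply (sup_mono _ _ _ _ (actr x) clA clQ (actr_supA x)); auto.
  - apply (sup_mono _ _ _ _ (fun m => actr m b) clQ clQ (fun P => actr_supQ P b)); auto.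
Qed.
Lemma mul_mono x y x' y' : leQ x x' -> leQ y y' -> leQ (mul x y) (mul x' y').
Proof.
  intros H1 H2. apply Qtrans with (mul x y').
  - apply (sup_mono _ _ _ _ (mul x) clQ clQ (mul_supr x)); auto.
  - apply (sup_mono _ _ _ _ (fun m => mul m y') clQ clQ (fun P => mul_supl P y')); auto.
Qed.
Lemma star_mono x y : leQ x y -> leQ (star x) (star y).
Proof. apply (sup_mono _ _ _ _ star clQ clQ star_sup). Qed.
Lemma supp_mono x y : leQ x y -> leA (supp x) (supp y).
Proof. apply (sup_mono _ _ _ _ supp clQ clA supp_sup). Qed.

Lemma star_le x a : leQ x (star a) <-> leQ (star x) a.
Proof.
  split; intro H.
  - rewrite <- (star_star a). apply star_mono; auto.
  - rewrite <- (star_star x). apply star_mono; auto.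
Qed.

Lemma Qtop x : leQ x topQ. Proof. apply (g_top _ _ clQ). Qed.
Lemma Atop a : leA a topA. Proof. apply (g_top _ _ clA). Qed.

Lemma star_top : star topQ = topQ.
Proof. apply Qanti. apply Qtop. apply star_le. apply Qtop. Qed.

Lemma star_actl a x : star (actl a x) = actr (star x) a.
Proof.
  transitivity (star (actl a (actr x topA))); [now rewrite actr_top|].
  rewrite star_act, actl_top. reflexivity.
Qed.
Lemma star_actr x b : star (actr x b) = actl b (star x).
Proof.
  transitivity (star (actl topA (actr x b))); [now rewrite actl_top|].
  rewrite star_act, actr_top. reflexivity.
Qed.

Lemma meetA_comm a b : meetA a b = meetA b a.
Proof. apply (g_meet_comm _ _ clA). Qed.
Lemma meetQ_comm a b : meetQ a b = meetQ b a.
Proof. apply (g_meet_comm _ _ clQ). Qed.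
Lemma meetQ_top x : meetQ topQ x = x.
Proof.
  apply Qanti. apply (g_meet_r _ _ clQ).
  apply (g_meet_glb _ _ clQ). apply Qtop. apply Qrefl.
Qed.
Lemma meetA_le a b : leA (meetA a b) a.
Proof. apply (g_meet_l _ _ clA). Qed.

Lemma actr_supp_star x : actr x (supp (star x)) = x.
Proof.
  rewrite <- (star_star x) at 1. rewrite <- star_actl, supp_fix, star_star. reflexivity.
Qed.

Lemma le_mul_top x : leQ x (mul x topQ).
Proof.
  rewrite <- (supp_fix x) at 1.
  eapply Qtrans. apply supp_le. rewrite mul_assoc.
  apply mul_mono. apply Qrefl. apply Qtop.
Qed.

Lemma tclos_incl (P : Q -> Q -> Prop) x y : P x y -> tclos D P x y.
Proof. intros H S _ HP. auto. Qed.

Lemma tclos_closed (P : Q -> Q -> Prop) : tclosed D (tclos D P).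
Proof.
  unfold tclosed, tclos. split; [|split; [|split]].
  - intros x y x' y' H Hx Hy S HS HP. apply (proj1 HS x y); [exact (H S HS HP)|auto|auto].
  - intros P' y H S HS HP. apply (proj1 (proj2 HS)). intros x Px. apply H; auto.
  - intros x P' H S HS HP. apply (proj1 (proj2 (proj2 HS))). intros y Py. apply H; auto.
  - intros x a y. split; intros H S HS HP; apply (proj2 (proj2 (proj2 HS))); apply H; auto.
Qed.

Lemma tclos_min (P S : Q -> Q -> Prop) : tclosed D S -> (forall x y, P x y -> S x y) ->
  forall u v, tclos D P u v -> S u v.
Proof. intros HS HP u v H. apply H; auto. Qed.

Lemma tclosed_mulle c : tclosed D (fun u v => leQ (mul u v) c).
Proof.
  split; [|split; [|split]].
  - intros x y x' y' H Hx Hy. eapply Qtrans; [|exact H]. apply mul_mono; auto.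
  - intros P y H. rewrite mul_supl. apply (g_lub _ _ clQ). intros q [x [Px ->]]. auto.
  - intros x P H. rewrite mul_supr. apply (g_lub _ _ clQ). intros q [y [Py ->]]. auto.
  - intros x a y. rewrite mul_actr. tauto.
Qed.

Lemma mchar a u v : mstar D a u v <-> leQ (mul u v) a.
Proof.
  split.
  - intro H. refine (tclos_min _ (fun u v => leQ (mul u v) a) (tclosed_mulle a) _ u v H). auto.
  - intro H. unfold mstar. apply tclos_incl. exact H.
Qed.

Lemma pi1char x u v : pi1star D x u v <-> leQ (actr u (supp v)) x.
Proof.
  split.
  - intro H0. refine (tclos_min _ (fun u v => leQ (actr u (supp v)) x) _ _ u v H0).
    + split; [|split; [|split]].
      * intros x0 y x' y' H Hx Hy. eapply Qtrans; [|exact H]. apply actr_mono; auto. apply supp_mono; auto.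
      * intros P y H. rewrite actr_supQ. apply (g_lub _ _ clQ). intros q [z [Pz ->]]. auto.
      * intros x0 P H. rewrite supp_sup, actr_supA. apply (g_lub _ _ clQ).
        intros q [b [[y [Py ->]] ->]]. auto.
      * intros x0 a y. rewrite supp_eq, actr_meet. tauto.
    + intros u0 v0 [-> ->]. rewrite supp_top, actr_top. apply Qrefl.
  - intros H S HS HP.
    rewrite <- (supp_fix v). apply (proj2 (proj2 (proj2 HS))).
    apply (proj1 HS x topQ); auto. apply Qtop.
Qed.

Lemma pi2char y u v : pi2star D y u v <-> leQ (actl (supp (star u)) v) y.
Proof.
  split.
  - intro H0. refine (tclos_min _ (fun u v => leQ (actl (supp (star u)) v) y) _ _ u v H0).
    + split; [|split; [|split]].
      * intros x0 y0 x' y' H Hx Hy. eapply Qtrans; [|exact H]. apply actl_mono; auto.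
        apply supp_mono, star_mono; auto.
      * intros P y0 H. rewrite star_sup, supp_sup, actl_supA. apply (g_lub _ _ clQ).
        intros q [b [[w [[z [Pz ->]] ->]] ->]]. auto.
      * intros x0 P H. rewrite actl_supQ. apply (g_lub _ _ clQ). intros q [z [Pz ->]]. auto.
      * intros x0 a y0. rewrite star_actr, supp_eq, <- actl_meet, meetA_comm. tauto.
    + intros u0 v0 [-> ->]. rewrite star_top, supp_top, actl_top. apply Qrefl.
  - intros H S HS HP.
    rewrite <- (actr_supp_star u). apply (proj2 (proj2 (proj2 HS))).
    apply (proj1 HS topQ y); auto. apply Qtop.
Qed.

Lemma gchar : exists g : Q -> Q -> Q -> Prop,
    (forall a u v, g a u v <-> leQ (mul u v) a) /\
    (forall P, teq D (g (supQ P)) (tclos D (fun u v => exists a, P a /\ g a u v))).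
Proof.
  destruct Hm as [g [Hg1 [Hg2 Hg3]]]. exists g. split; auto.
  intros a u v. split; intro H.
  - assert (Hmu : leQ (muA D (g a)) a). { apply (Hg2 (g a) a (Hg1 a)). auto. }
    eapply Qtrans; [|exact Hmu]. apply (g_ub _ _ clQ). exists u, v. auto.
  - apply (proj1 (Hg2 (fun x y => leQ (mul x y) (mul u v)) a (tclosed_mulle _))).
    + apply (g_lub _ _ clQ). intros q [x [y [Hxy ->]]]. eapply Qtrans; eauto.
    + apply Qrefl.
Qed.

Lemma tfh_pi1 : tframe_hom D (pi1star D).
Proof.
  split; [|split; [|split]].
  - intro x. apply tclos_closed.
  - intros P u v. split.
    + intro H. refine (tclos_min _ _ (tclos_closed _) _ u v H).
      intros x0 y0 [-> ->]. apply (proj1 (proj2 (tclos_closed _))). intros x Px.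
      apply tclos_incl. exists x. split; auto. apply pi1char. rewrite supp_top, actr_top. apply Qrefl.
    + intro H. refine (tclos_min _ (pi1star D (supQ P)) (tclos_closed _) _ u v H).
      intros x0 y0 [x [Px Hx]]. apply pi1char in Hx. apply pi1char.
      eapply Qtrans; [exact Hx|]. apply (g_ub _ _ clQ); auto.
  - intros x y u v. rewrite !pi1char. split.
    + intro H. split; eapply Qtrans; try exact H; [apply (g_meet_l _ _ clQ) | apply (g_meet_r _ _ clQ)].
    + intros [H1 H2]. apply (g_meet_glb _ _ clQ); auto.
  - intros u v. rewrite pi1char. split; auto. intros _. apply Qtop.
Qed.

Lemma tfh_pi2 : tframe_hom D (pi2star D).
Proof.
  split; [|split; [|split]].
  - intro x. apply tclos_closed.
  - intros P u v. split.
    + intro H. refine (tclos_min _ _ (tclos_closed _) _ u v H).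
      intros x0 y0 [-> ->]. apply (proj1 (proj2 (proj2 (tclos_closed _)))). intros x Px.
      apply tclos_incl. exists x. split; auto. apply pi2char. rewrite star_top, supp_top, actl_top. apply Qrefl.
    + intro H. refine (tclos_min _ (pi2star D (supQ P)) (tclos_closed _) _ u v H).
      intros x0 y0 [x [Px Hx]]. apply pi2char in Hx. apply pi2char.
      eapply Qtrans; [exact Hx|]. apply (g_ub _ _ clQ); auto.
  - intros x y u v. rewrite !pi2char. split.
    + intro H. split; eapply Qtrans; try exact H; [apply (g_meet_l _ _ clQ) | apply (g_meet_r _ _ clQ)].
    + intros [H1 H2]. apply (g_meet_glb _ _ clQ); auto.
  - intros u v. rewrite pi2char. split; auto. intros _. apply Qtop.
Qed.

Lemma tfh_m : tframe_hom D (mstar D).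
Proof.
  split; [|split; [|split]].
  - intro x. apply tclos_closed.
  - intros P u v. split.
    + intro H. apply mchar in H. destruct gchar as [g [Hg1 Hg2]].
      apply Hg1 in H. apply Hg2 in H. refine (tclos_min _ _ (tclos_closed _) _ u v H).
      intros x y [a [Pa Ha]]. apply tclos_incl. exists a. split; auto. apply mchar, Hg1, Ha.
    + intro H. refine (tclos_min _ (mstar D (supQ P)) (tclos_closed _) _ u v H).
      intros x y [a [Pa Ha]]. apply mchar in Ha. apply mchar.
      eapply Qtrans; [exact Ha|]. apply (g_ub _ _ clQ); auto.
  - intros x y u v. rewrite !mchar. split.
    + intro H. split; eapply Qtrans; try exact H; [apply (g_meet_l _ _ clQ) | apply (g_meet_r _ _ clQ)].
    + intros [H1 H2]. apply (g_meet_glb _ _ clQ); auto.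
  - intros u v. rewrite mchar. split; auto. intros _. apply Qtop.
Qed.

Lemma main : involutive_open_semicategory D.
Proof.
  unfold involutive_open_semicategory.
  split; [|split; [|split; [|split; [|split; [|split; [|split; [|split; [|split; [|split; [|split; [|split]]]]]]]]]]].
  -
    split; [|split].
    + intro P. unfold dstar. apply actl_supA.
    + intros a b. unfold dstar.
      change (actl (meetA a b) topQ = meetQ (actl a topQ) (actl b topQ)).
      rewrite actl_meet, meetQ_actl, meetQ_top. reflexivity.
    + unfold dstar. change (actl topA topQ = topQ). apply actl_top.
  -
    split; [|split].
    + intro P. unfold istar. exact (star_sup P).
    + intros x y. unfold istar. change (star (meetQ x y) = meetQ (star x) (star y)).
      apply Qanti.
      * apply (g_meet_glb _ _ clQ); apply star_mono; [apply (g_meet_l _ _ clQ)|apply (g_meet_r _ _ clQ)].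
      * apply (proj2 (star_le _ _)). apply (g_meet_glb _ _ clQ); apply (proj1 (star_le _ _));
          [apply (g_meet_l _ _ clQ)|apply (g_meet_r _ _ clQ)].
    + unfold istar. exact star_top.
  - exact tfh_pi1.
  - exact tfh_pi2.
  - exact tfh_m.
  -
    intros a u v. unfold rstar, istar, dstar. rewrite star_actl, star_top. split.
    + intro H. refine (tclos_min _ (pi2star D (actl a topQ)) (tclos_closed _) _ u v H).
      intros x y [-> ->].
      apply (proj1 (proj2 (proj2 (proj2 (tclos_closed _))) topQ a topQ)).
      apply tclos_incl. auto.
    + intro H. refine (tclos_min _ (pi1star D (actr topQ a)) (tclos_closed _) _ u v H).
      intros x y [-> ->].
      apply (proj2 (proj2 (proj2 (proj2 (tclos_closed _))) topQ a topQ)).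
      apply tclos_incl. auto.
  -
    intros a u v. unfold dstar. split.
    + intro H. apply mchar in H. apply pi1char.
      eapply Qtrans. apply le_mul_top. rewrite mul_actr.
      eapply Qtrans. apply mul_mono. apply Qrefl. apply supp_le.
      rewrite mul_assoc. rewrite <- mul_assoc.
      eapply Qtrans. apply mul_mono. exact H. apply Qrefl.
      rewrite mul_actl. apply actl_mono. apply Arefl. apply Qtop.
    + intro H. refine (tclos_min _ (mstar D (actl a topQ)) (tclos_closed _) _ u v H).
      intros x y [-> ->]. apply mchar. rewrite mul_actl. apply actl_mono; [apply Arefl|apply Qtop].
  -
    intros a u v. unfold rstar, istar, dstar. rewrite star_actl, star_top. split.
    + intro H. apply mchar in H. apply pi2char.
      eapply Qtrans. apply supp_le. rewrite star_star, mul_assoc.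
      eapply Qtrans. apply mul_mono. apply Qrefl. exact H.
      rewrite <- actr_mul. apply actr_mono. apply Qtop. apply Arefl.
    + intro H. refine (tclos_min _ (mstar D (actr topQ a)) (tclos_closed _) _ u v H).
      intros x y [-> ->]. apply mchar. rewrite <- actr_mul. apply actr_mono; [apply Qtop|apply Arefl].
  -
    intros a u v w. unfold m_id_star, id_m_star. split.
    + intros H S HS HP. apply (H S HS). intros x y z Hg. apply HP.
      apply mchar. cbv beta in Hg. apply (proj1 (mchar _ _ _)) in Hg. rewrite <- mul_assoc. exact Hg.
    + intros H S HS HP. apply (H S HS). intros x y z Hg. apply HP.
      apply mchar. cbv beta in Hg. apply (proj1 (mchar _ _ _)) in Hg. rewrite mul_assoc. exact Hg.
  - intro x. unfold istar. apply star_star.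
  - intro a. reflexivity.
  - intros a u v. unfold twist_star, istar. rewrite !mchar, <- star_mul. apply star_le.
  - exists supp. split.
    + intros x a. unfold dstar. split; intro H.
      * rewrite <- (supp_fix x). apply actl_mono; [exact H|apply Qtop].
      * eapply Atrans. apply supp_mono. exact H. rewrite supp_eq, supp_top. apply meetA_le.
    + intros x a. unfold dstar. rewrite meetQ_comm, meetQ_actl, meetQ_top, supp_eq. apply meetA_comm.
Qed.

End Main.

Theorem theorem4p20 (D : qdata)
  (HQ : is_based_quantal_frame D)
  (Hs : is_equivariant_support D)
  (Hm : is_multiplicative D) :
  involutive_open_semicategory D.
Proof.
  exact (main D HQ Hs Hm).
Qed.
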